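(* For a positive integer $m$, consider the two-stage adjustable problem with $n=m$, $\mathbf c=\mathbf 0$, $\mathbf d=\mathbf e$, $\mathbf A=\mathbf 0$, the matrix $\mathbf B\in\mathbb R_+^{m\times m}$ with $B_{ii}=1$ and $B_{ij}=\frac1{\sqrt m}$ for $i\ne j$, and uncertainty set $$\mathcal U=\operatorname{conv}\left(\mathbf 0,\mathbf e_1,\dots,\mathbf e_m,\boldsymbol\nu_1,\dots,\boldsymbol\nu_m\right),\qquad \boldsymbol\nu_i=\tfrac{1}{\sqrt m}(\mathbf e-\mathbf e_i),\ i\in[m].$$ Then $z_{\sf Aff}(\mathbf B)=\Omega(\sqrt m)\cdot z_{\sf AR}(\mathbf B)$, i.e. there are absolute constants $C>0$ and $m_0$ such that $z_{\sf Aff}(\mathbf B)\ge C\sqrt m\,z_{\sf AR}(\mathbf B)$ for all $m\ge m_0$.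
   Context: For data $\mathbf A,\mathbf B\in\mathbb R_+^{m\times n}$, $\mathbf c,\mathbf d\in\mathbb R_+^n$ and a compact convex set $\mathcal U\subseteq\mathbb R^m_+$, the two-stage adjustable robust problem is $$z_{\sf AR}(\mathbf B)=\min_{\mathbf x\in\mathbb R^n_+}\ \mathbf c^T\mathbf x+\max_{\mathbf h\in\mathcal U}\ \min_{\mathbf y(\mathbf h)\in\mathbb R^n_+:\ \mathbf A\mathbf x+\mathbf B\mathbf y(\mathbf h)\ge \mathbf h}\ \mathbf d^T\mathbf y(\mathbf h).$$ The affine policy problem $z_{\sf Aff}(\mathbf B)$ is the same problem with the second-stage decision restricted to $\mathbf y(\mathbf h)=\mathbf P\mathbf h+\mathbf q$ for some $\mathbf P\in\mathbb R^{n\times m}$, $\mathbf q\in\mathbb R^n$: it is the minimum over $\mathbf x\in\mathbb R^n_+,\mathbf P,\mathbf q$ of $\mathbf c^T\mathbf x+\max_{\mathbf h\in\mathcal U}\mathbf d^T(\mathbf P\mathbf h+\mathbf q)$ subject to $\mathbf A\mathbf x+\mathbf B(\mathbf P\mathbf h+\mathbf q)\ge\mathbf h$ and $\mathbf P\mathbf h+\mathbf q\ge\mathbf 0$ for all $\mathbf h\in\mathcal U$. $\mathbf e$ is the all-ones vector and $\mathbf e_i$ the $i$-th standard basis vector of $\mathbb R^m$. *)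

(* Defs.v *)
From HB Require Import structures.
From mathcomp Require Import all_boot all_order all_algebra.
From mathcomp Require Import all_classical all_reals ereal.
Set Implicit Arguments. Unset Strict Implicit. Unset Printing Implicit Defensive.
Import Order.TTheory GRing.Theory Num.Theory.
Local Open Scope classical_set_scope.
Local Open Scope ring_scope.

Section Defs.
Variable R : realType.

Definition dotv n (u v : 'cV[R]_n) : R := \sum_(i < n) u i 0 * v i 0.

Definition vge n (u v : 'cV[R]_n) : Prop := forall i, v i 0 <= u i 0.
Definition nonneg n (u : 'cV[R]_n) : Prop := vge u 0.

Definition conv_hull m (S : set 'cV[R]_m) : set 'cV[R]_m :=
  [set x | exists (k : nat) (lam : 'I_k -> R) (p : 'I_k -> 'cV[R]_m),
      (forall i, S (p i)) /\ (forall i, 0 <= lam i) /\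
      \sum_(i < k) lam i = 1 /\ x = \sum_(i < k) lam i *: p i].

Definition second_stage m n (A B : 'M[R]_(m, n)) (d x : 'cV[R]_n) (h : 'cV[R]_m)
  : \bar R :=
  ereal_inf [set (dotv d y)%:E | y in
     [set y : 'cV[R]_n | nonneg y /\ vge (A *m x + B *m y) h]].

Definition z_AR m n (A B : 'M[R]_(m, n)) (c d : 'cV[R]_n) (U : set 'cV[R]_m)
  : \bar R :=
  ereal_inf [set ((dotv c x)%:E + ereal_sup [set second_stage A B d x h | h in U])%E
             | x in [set x : 'cV[R]_n | nonneg x]].

Definition z_Aff m n (A B : 'M[R]_(m, n)) (c d : 'cV[R]_n) (U : set 'cV[R]_m)
  : \bar R :=
  ereal_inf [set ((dotv c xPq.1.1)%:E +
                  ereal_sup [set (dotv d (xPq.1.2 *m h + xPq.2))%:E | h in U])%E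
     | xPq in [set xPq : 'cV[R]_n * 'M[R]_(n, m) * 'cV[R]_n |
                 nonneg xPq.1.1 /\
                 (forall h, U h ->
                    vge (A *m xPq.1.1 + B *m (xPq.1.2 *m h + xPq.2)) h /\
                    nonneg (xPq.1.2 *m h + xPq.2))]].

Definition e_vec m : 'cV[R]_m := const_mx 1.
Definition e_basis m (i : 'I_m) : 'cV[R]_m := delta_mx i 0.
Definition nu_vec m (i : 'I_m) : 'cV[R]_m :=
  (Num.sqrt (m%:R : R))^-1 *: (e_vec m - e_basis i).
Definition B_inst m : 'M[R]_m :=
  \matrix_(i, j) (if i == j then 1 else (Num.sqrt (m%:R : R))^-1).
Definition U_inst m : set 'cV[R]_m :=
  conv_hull ([set 0] `|` range (@e_basis m) `|` range (@nu_vec m)).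

End Defs.

(* Main.v *)
Require Import Defs.
From HB Require Import structures.
From mathcomp Require Import all_boot all_order all_algebra.
From mathcomp Require Import all_classical all_reals ereal.
From mathcomp Require Import ring lra.
Import Order.TTheory GRing.Theory Num.Theory.
Local Open Scope classical_set_scope.
Local Open Scope ring_scope.
Set Implicit Arguments. Unset Strict Implicit. Unset Printing Implicit Defensive.

Lemma final_alg (R : realType) (s u M A D b : R) : 0 < s -> s * u = 1 -> s * s = M -> 2 <= M -> 0 <= b ->
  M <= (D + b) + u * ((A + b * M) - (D + b)) -> 0 <= b + u * (A - D) ->
  s / 4 <= b \/ s / 4 <= b + ((M - 1) * (M^-1 * u)) * A.
Proof.
move=> s0 su sM M2 b0 HR HN.
have u0 : 0 < u by nra.
have u1 : u <= 1 by nra.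
have HN' : D <= A + s * b by nra.
have HA : M - 2 * s * b <= A.
  have : M <= (1 - u) * (A + s * b + b) + u * A + u * b * M by nra.
  have -> : u * b * M = s * b by rewrite -sM -[s * b]mul1r -su; ring.
  nra.
have Mi : M^-1 * M = 1 by rewrite mulVf //; apply/eqP; lra.
have Mi0 : 0 < M^-1 by rewrite invr_gt0; lra.
set c := (M - 1) * (M^-1 * u).
have c0 : 0 <= c by rewrite /c; apply: mulr_ge0; [lra| apply: mulr_ge0; lra].
have cM : c * M = (M - 1) * u.
  apply/eqP; rewrite -subr_eq0.
  have -> : c * M - (M - 1) * u = (M - 1) * u * (M^-1 * M - 1) by rewrite /c; ring.
  by rewrite Mi subrr mulr0.
have cs : c * s <= 1.
  have -> : c * s = (M - 1) * M^-1.
    apply/eqP; rewrite -subr_eq0.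
    have -> : c * s - (M - 1) * M^-1 = (M - 1) * M^-1 * (s * u - 1) by rewrite /c; ring.
    by rewrite su subrr mulr0.
  nra.
have : c * (M - 2 * s * b) <= c * A by nra.
have hu : u <= s / 2 by nra.
case: (lerP (s / 4) b) => hb; [by left | right].
nra.
Qed.

Section Aux.
Variable R : realType.
Variable m : nat.
Local Notation s := (Num.sqrt (m%:R : R)).

Lemma Bmul_entry (v : 'cV[R]_m) i :
  (@B_inst R m *m v) i 0 = v i 0 + s^-1 * (\sum_k v k 0 - v i 0).
Proof.
rewrite mxE (bigD1 i) //= mxE eqxx mul1r; congr (_ + _).
rewrite [in RHS](bigD1 i) //= addrAC subrr add0r mulr_sumr; apply: eq_bigr => k /negbTE kn.
by rewrite mxE eq_sym kn.
Qed.

Lemma mul_basis (P : 'M[R]_m) i k : (P *m @e_basis R m i) k 0 = P k i.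
Proof.
rewrite mxE (bigD1 i) //= !mxE !eqxx mulr1 big1 ?addr0 // => j /negbTE ji.
by rewrite !mxE ji mulr0.
Qed.

Lemma nu_entry i k : @nu_vec R m i k 0 = s^-1 * (1 - (k == i)%:R).
Proof. by rewrite !mxE eqxx andbT. Qed.

Lemma mul_nu_diag (P : 'M[R]_m) i :
  (P *m @nu_vec R m i) i 0 = s^-1 * (\sum_j P i j - P i i).
Proof.
rewrite mxE [in RHS](bigD1 i) //= addrAC subrr add0r mulr_sumr (bigD1 i) //=.
rewrite nu_entry eqxx subrr mulr0 mulr0 add0r; apply: eq_bigr => j /negbTE ji.
by rewrite nu_entry ji subr0 mulr1 mulrC.
Qed.

Lemma dot_e (v : 'cV[R]_m) : dotv (@e_vec R m) v = \sum_k v k 0.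
Proof. by apply: eq_bigr => k _; rewrite mxE mul1r. Qed.


Local Notation S := ([set 0] `|` range (@e_basis R m) `|` range (@nu_vec R m)).

Lemma s_ge0 : 0 <= s^-1.
Proof. by rewrite invr_ge0 sqrtr_ge0. Qed.

Lemma vertex_y p : S p -> exists y : 'cV[R]_m,
  nonneg y /\ vge (@B_inst R m *m y) p /\ dotv (@e_vec R m) y <= 1.
Proof.
have s0 := s_ge0.
case=> [[->|[i _ <-]]|[i _ <-]].
- exists 0; split; first by move=> k; rewrite mxE.
  split; last by rewrite dot_e big1 // => k _; rewrite mxE.
  by move=> k; rewrite mulmx0.
- exists (@e_basis R m i); split; first by move=> k; rewrite !mxE ler0n.
  split; last by rewrite dot_e (bigD1 i) //= mxE !eqxx big1 ?addr0 // => k kn; rewrite mxE (negbTE kn).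
  move=> k; rewrite mul_basis !mxE andbT eq_sym; case: eqP => _ //; exact: s_ge0.
- exists (@e_basis R m i); split; first by move=> k; rewrite !mxE ler0n.
  split; last by rewrite dot_e (bigD1 i) //= mxE !eqxx big1 ?addr0 // => k kn; rewrite mxE (negbTE kn).
  move=> k; rewrite mul_basis nu_entry !mxE; case: (k == i).
    by rewrite subrr mulr0.
  by rewrite subr0 mulr1.
Qed.

Lemma U_y h : @U_inst R m h -> exists y : 'cV[R]_m,
  nonneg y /\ vge (@B_inst R m *m y) h /\ dotv (@e_vec R m) y <= 1.
Proof.
case=> k [lam [p [Sp [lam0 [lam1 ->]]]]].
have [f Hf] := boolp.choice (fun i => vertex_y (Sp i)).
exists (\sum_(i < k) lam i *: f i); split; last split.
- move=> j; rewrite summxE !mxE; apply: sumr_ge0 => i _; rewrite mxE.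
  apply: mulr_ge0 => //; have [H _] := Hf i; have := H j; by rewrite mxE.
- move=> j; rewrite mulmx_sumr !summxE; apply: ler_sum => i _.
  rewrite -scalemxAr !mxE; apply: ler_wpM2l => //; have [_ [H _]] := Hf i; by have := H j; rewrite !mxE.
- rewrite dot_e; under eq_bigr do rewrite summxE.
  rewrite exchange_big /= -lam1; apply: ler_sum => i _.
  under eq_bigr do rewrite mxE; rewrite -mulr_sumr -[X in _ <= X]mulr1.
  apply: ler_wpM2l => //; have [_ [_ H]] := Hf i; by rewrite -dot_e.
Qed.

Lemma pt_in_U h : S h -> @U_inst R m h.
Proof.
move=> Sh; exists 1%N, (fun _ => 1), (fun _ => h); split => //; split => // ; split.
  by rewrite big_ord1.
by rewrite big_ord1 scale1r.
Qed.

Lemma hbar_in_U : (0 < m)%N -> @U_inst R m (\sum_(i < m) (m%:R^-1) *: @nu_vec R m i).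
Proof.
move=> m0; exists m, (fun _ => m%:R^-1), (@nu_vec R m); split.
  by move=> i; right; exists i.
split; first by move=> i; rewrite invr_ge0 ler0n.
split => //; rewrite sumr_const card_ord -[(m%:R^-1) *+ m]mulr_natr mulVf //.
by rewrite pnatr_eq0 -lt0n.
Qed.

Lemma hbar_entry k :
  (\sum_(i < m) (m%:R^-1) *: @nu_vec R m i) k 0 = (m%:R - 1) * (m%:R^-1 * s^-1).
Proof.
rewrite summxE; under eq_bigr do rewrite mxE nu_entry.
rewrite -mulr_sumr -mulr_sumr sumrB sumr_const card_ord (bigD1 k) //= eqxx big1 ?addr0.
  by have -> : (true%:R : R) = 1 by []; ring.
by move=> i; rewrite eq_sym => /negbTE ->.
Qed.

End Aux.

Lemma aff_entry (R : realType) m n (P : 'M[R]_(m, n)) (h : 'cV[R]_n) q k :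
  (P *m h + q) k 0 = (P *m h) k 0 + q k 0.
Proof. by rewrite [LHS]mxE. Qed.

Theorem lemma5 (R : realType) :
  exists (C : R) (m0 : nat), 0 < C /\
    forall m : nat, (0 < m)%N -> (m0 <= m)%N ->
      (((C * Num.sqrt (m%:R : R))%:E *
         z_AR (0 : 'M[R]_m) (@B_inst R m) 0 (@e_vec R m) (@U_inst R m))
       <= z_Aff (0 : 'M[R]_m) (@B_inst R m) 0 (@e_vec R m) (@U_inst R m))%E.
Proof.
exists (1/4), 2%N; split; first lra.
move=> m m0 m2.
set s := Num.sqrt (m%:R : R).
have s0 : 0 < s by rewrite sqrtr_gt0 ltr0n.
have zAR1 : (z_AR (0 : 'M[R]_m) (@B_inst R m) 0 (@e_vec R m) (@U_inst R m) <= 1%:E)%E.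
  apply: ge_ereal_inf; eexists; first by exists 0 => //; move=> i; rewrite mxE.
  have -> : dotv (0 : 'cV[R]_m) 0 = 0 by rewrite /dotv big1 // => i _; rewrite mxE mul0r.
  rewrite add0e; apply: ge_ereal_sup => z [h Uh <-].
  have [y [y0 [yB y1]]] := U_y Uh.
  apply: ge_ereal_inf; exists (dotv (@e_vec R m) y)%:E; last by rewrite lee_fin.
  by exists y => //; split => //; rewrite mul0mx add0r.
have zAff : ((1/4 * s)%:E <= z_Aff (0 : 'M[R]_m) (@B_inst R m) 0 (@e_vec R m) (@U_inst R m))%E.
  apply: le_ereal_inf_tmp => z [[[x P] q] /= [x0 Hf] <-].
  have -> : dotv (0 : 'cV[R]_m) x = 0 by rewrite /dotv big1 // => i _; rewrite mxE mul0r.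
  rewrite add0e.
  have Hf' h : @U_inst R m h -> vge (@B_inst R m *m (P *m h + q)) h /\ nonneg (P *m h + q).
    by move=> Uh; have := Hf h Uh; rewrite mul0mx add0r.
  set b := \sum_k q k 0.
  set A := \sum_k \sum_j P k j.
  set D := \sum_i P i i.
  have q0 : forall k, 0 <= q k 0.
    have U0 : @U_inst R m 0 by apply: pt_in_U; left; left.
    have [_ H] := Hf' _ U0; move=> k; have := H k; by rewrite mulmx0 add0r mxE.
  have b0 : 0 <= b by apply: sumr_ge0.
  have HR i : 1 <= (P i i + q i 0) + s^-1 * ((\sum_k P k i + b) - (P i i + q i 0)).
    have Ue : @U_inst R m (@e_basis R m i) by apply: pt_in_U; left; right; exists i.
    have [H _] := Hf' _ Ue; have := H i.
    rewrite Bmul_entry aff_entry mul_basis.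
    under eq_bigr do rewrite aff_entry mul_basis.
    by rewrite big_split /= mxE !eqxx.
  have HN i : 0 <= q i 0 + s^-1 * (\sum_j P i j - P i i).
    have Un : @U_inst R m (@nu_vec R m i) by apply: pt_in_U; right; exists i.
    have [_ H] := Hf' _ Un; have := H i.
    by rewrite aff_entry mul_nu_diag mxE addrC.
  have SR : m%:R <= (D + b) + s^-1 * ((A + b * m%:R) - (D + b)).
    have := @ler_sum _ _ (index_enum 'I_m) xpredT (fun _ => 1) _ (fun i _ => HR i).
    rewrite sumr_const card_ord big_split /= -mulr_sumr sumrB !big_split /= sumr_const card_ord.
    by rewrite exchange_big /= mulr_natr.
  have SN : 0 <= b + s^-1 * (A - D).
    have := @ler_sum _ _ (index_enum 'I_m) xpredT (fun _ => 0) _ (fun i _ => HN i).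
    by rewrite big1 // big_split /= -mulr_sumr sumrB.
  have su : s * s^-1 = 1 by rewrite mulfV // gt_eqF.
  have ss : s * s = m%:R by rewrite -expr2 sqr_sqrtr // ler0n.
  have M2 : 2 <= (m%:R : R) by rewrite ler_nat.
  have [hb|hb] := final_alg s0 su ss M2 b0 SR SN.
    apply: le_ereal_sup_tmp; exists (dotv (@e_vec R m) (P *m 0 + q))%:E.
      by exists 0 => //; apply: pt_in_U; left; left.
    rewrite lee_fin dot_e mulmx0 add0r -/b; lra.
  apply: le_ereal_sup_tmp.
  exists (dotv (@e_vec R m) (P *m (\sum_(i < m) (m%:R^-1) *: @nu_vec R m i) + q))%:E.
    by exists (\sum_(i < m) (m%:R^-1) *: @nu_vec R m i) => //; apply: hbar_in_U.
  rewrite lee_fin dot_e.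
  under eq_bigr do rewrite aff_entry mxE.
  under eq_bigr do under eq_bigr do rewrite hbar_entry.
  rewrite big_split /=.
  under eq_bigr do rewrite -mulr_suml.
  rewrite -mulr_suml -/A -/b -/s; nra.
apply: le_trans zAff.
rewrite -[X in (_ <= X)%E]mule1; apply: lee_wpmul2l => //.
by rewrite lee_fin; apply: mulr_ge0 => //; lra.
Qed.
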